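(* Let $n \ge 2$ be an integer and let $p_0 = \frac{n\log n - (n-1)\log(n-1)}{\log n}$. Then for every $1 \le p \le p_0$ we have $U(n,p) = 1$; that is, the maximum of the permanent over $n\times n$ matrices whose rows are unit vectors in $\ell_p^n$ equals $1$, the value attained by the identity matrix.
   Context: For $n\ge 1$ and $1 \le p \le \infty$, $U(n,p)$ denotes the maximum of $\mathrm{per}(A)=\sum_{\sigma\in S_n}\prod_{i=1}^n a_{i\sigma(i)}$ over all real $n\times n$ matrices $A$ each of whose rows has $\ell_p$-norm equal to $1$. *)

(* Defs.v *)
From HB Require Import structures.
From mathcomp Require Import all_boot all_order all_algebra all_fingroup.
From mathcomp Require Import all_classical all_reals all_analysis.
Set Implicit Arguments. Unset Strict Implicit. Unset Printing Implicit Defensive.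
Import Order.TTheory GRing.Theory Num.Theory.
Local Open Scope ring_scope.

Definition per {R : realType} {n : nat} (A : 'M[R]_n) : R :=
  \sum_(s : 'S_n) \prod_(i < n) A i (s i).

Definition lpnorm_row {R : realType} {n : nat} (p : R) (A : 'M[R]_n) (i : 'I_n) : R :=
  (\sum_(j < n) (`|A i j| `^ p)) `^ (p^-1).

Definition rows_unit_lp {R : realType} {n : nat} (p : R) (A : 'M[R]_n) : Prop :=
  forall i : 'I_n, lpnorm_row p A i = 1.

Definition is_U {R : realType} (n : nat) (p v : R) : Prop :=
  (exists A : 'M[R]_n, rows_unit_lp p A /\ per A = v) /\
  (forall A : 'M[R]_n, rows_unit_lp p A -> per A <= v).

(* Main.v *)
Require Import Defs.
From HB Require Import structures.
From mathcomp Require Import all_boot all_order all_algebra all_fingroup.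
From mathcomp Require Import all_classical all_reals all_analysis.
From mathcomp Require Import ring lra zify.
Import Order.TTheory GRing.Theory Num.Theory.
Local Open Scope ring_scope.

Section All.
Variable R : realType.


Lemma powR_lin (x t : R) : 0 <= x -> 0 <= t -> t <= 1 -> x `^ t <= t * x + (1 - t).
Proof.
move=> x0 t0 t1.
have [->|xpos] := eqVneq x 0.
  rewrite /powR eqxx mulr0 add0r; have [->|tn0] := eqVneq t 0; first by rewrite subr0.
  by rewrite /= subr_ge0.
have xp : 0 < x by rewrite lt_neqAle eq_sym xpos.
have := concave_ln (Itv01 t0 t1) xp ltr01.
rewrite !convRE /= ln1 mulr0 addr0 mulr1 => H.
have pos : 0 < t * x + (1 - t).
  have [->|tpos] := eqVneq t 0; first by rewrite mul0r add0r subr0.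
  by rewrite ltr_wpDr ?subr_ge0 // mulr_gt0 // lt_neqAle eq_sym tpos.
rewrite /powR (negbTE xpos) -[X in _ <= X](lnK pos) ler_expR.
by move: H; rewrite /unstable.onem.
Qed.

Lemma powR_tangent (m x s : R) : 0 <= m -> 0 <= x -> 1 < s ->
  s * m `^ (s - 1) * x - (s - 1) * m `^ s <= x `^ s.
Proof.
move=> m0 x0 s1.
have s0 : 0 < s by apply: lt_trans s1.
have s10 : 0 < s - 1 by rewrite subr_gt0.
have P0 : 0 < s / (s - 1) by rewrite divr_gt0.
have hc : (s / (s - 1))^-1 + s^-1 = 1.
  by field; rewrite ?gt_eqF.
have := conjugate_powR (powR_ge0 m (s - 1)) x0 P0 s0 hc.
rewrite -powRrM mulrCA divff ?gt_eqF // mulr1 => H.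
have e : m `^ s / (s / (s - 1)) = (s - 1) / s * m `^ s.
  by field; rewrite ?gt_eqF.
rewrite e in H.
have H2 := ler_wpM2l (ltW s0) H.
suff : s * (m `^ (s - 1) * x) <= s * ((s - 1) / s * m `^ s + x `^ s / s).
  have e2 : s * ((s - 1) / s * m `^ s + x `^ s / s) = (s-1) * m `^ s + x `^ s.
    by field; rewrite gt_eqF.
  rewrite e2 mulrA; lra.
exact: H2.
Qed.

Lemma powR_strict (v s : R) : 0 < v -> v < 1 -> 1 < s ->
  0 < v `^ s - s * v + (s - 1).
Proof.
move=> v0 v1 s1.
set m := (1 + v) / 2.
have m0 : 0 < m by rewrite /m divr_gt0 // addr_gt0.
have m1 : m < 1 by rewrite /m ltr_pdivrMr // mul1r; lra.
have mv : v < m by rewrite /m ltr_pdivlMr //; lra.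
set mu := m `^ (s - 1).
have H1 := @powR_tangent m v s (ltW m0) (ltW v0) s1.
have H2 := @powR_tangent 1 m s ler01 (ltW m0) s1.
rewrite powR1 mulr1 in H2.
have ems : m `^ s = m * mu.
  rewrite /mu -[X in X * _](powRr1 (ltW m0)) -powRD; last by rewrite (gt_eqF m0) implybT.
  by rewrite addrC subrK.
have H3 : mu < 1.
  rewrite /mu /powR gt_eqF // expR_lt1 pmulr_rlt0 ?subr_gt0 //.
  by rewrite ln_lt0 // m0 m1.
rewrite ems in H1 H2.
have H4 : 0 < (m - v) * (1 - mu) by rewrite mulr_gt0 // subr_gt0.
have s0 : 0 < s by lra.
have H5 : 0 < s * ((m - v) * (1 - mu)) by rewrite mulr_gt0.
rewrite -/mu in H1.
nra.
Qed.

Lemma powR_le1 (V r : R) : 0 < V -> V <= 1 -> 0 <= r -> V `^ r <= 1.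
Proof.
move=> V0 V1 r0; rewrite /powR gt_eqF // expR_le1.
by rewrite mulr_ge0_le0 // ln_le0.
Qed.

Lemma young_gap (p s a b V : R) : 1 < p -> 1 < s -> p^-1 + s^-1 = 1 ->
  0 <= a -> 0 < V -> V <= 1 -> 0 <= b -> b <= a `^ (p - 1) * V ->
  a * b + (1 - a `^ p) / p + (1 - b `^ s) / s <=
  1 - a `^ p * (p^-1 - V + V `^ s / s).
Proof.
move=> p1 s1 ps a0 V0 V1 b0 bb.
have p0 : 0 < p by lra.
have s0 : 0 < s by lra.
have e0 : p * s = p + s.
  have := congr1 (fun x => x * (p * s)) ps; rewrite /= mul1r => <-.
  rewrite mulrDl mulrA mulVf ?gt_eqF // mul1r (mulrC p s) mulrA mulVf ?gt_eqF //.
  by rewrite mul1r addrC.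
have eps1 : (p - 1) * (s - 1) = 1.
  have -> : (p - 1) * (s - 1) = p * s - p - s + 1 by ring.
  by rewrite e0; ring.
have eps2 : (p - 1) * s = p.
  have -> : (p - 1) * s = p * s - s by ring.
  by rewrite e0; ring.
set beta := a `^ (p - 1) * V.
set y := a `^ p.
set w := V `^ (s - 1).
set z := V `^ s.
have w1 : w <= 1 by apply: powR_le1 => //; lra.
have w0 : 0 <= w by apply: powR_ge0.
have ez : z = V * w.
  rewrite /z /w -[X in X * _](powRr1 (ltW V0)) -powRD; last by rewrite (gt_eqF V0) implybT.
  by rewrite addrC subrK.
have eb1 : beta `^ (s - 1) = a * w.
  rewrite /beta powRM ?powR_ge0 ?(ltW V0) // -powRrM eps1 powRr1 //.
have eb2 : beta `^ s = y * z.
  rewrite /beta powRM ?powR_ge0 ?(ltW V0) // -powRrM eps2 //.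
have eb3 : beta * a = y * V.
  by rewrite /beta /y mulrAC (mulrC (a `^ (p - 1)) a) mulr_powRB1.
have T := @powR_tangent beta b s (mulr_ge0 (powR_ge0 _ _) (ltW V0)) b0 s1.
rewrite eb1 eb2 in T.
have H1 : a * b * (1 - w) <= a * beta * (1 - w).
  by rewrite ler_wpM2r ?subr_ge0 // ler_wpM2l.
have ep : p^-1 = 1 - s^-1 by rewrite -ps addrK.
rewrite ep.
have es : s^-1 * s = 1 by rewrite mulVf ?gt_eqF.
set B := b `^ s in T *.
have hs : 0 < s^-1 by rewrite invr_gt0.
have T' : s^-1 * (s * (a * w) * b - (s - 1) * (y * z)) <= s^-1 * B.
  by rewrite ler_wpM2l // ltW.
rewrite mulrBr !mulrA es mul1r in T'.
have E1 : s^-1 * (s - 1) = 1 - s^-1 by rewrite mulrBr es mulr1.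
rewrite E1 in T'.
rewrite (mulrC a beta) eb3 in H1.
rewrite ez in T' *.
move: T' H1; set k := s^-1; rewrite (mulrC _ k) => T' H1.
nra.
Qed.

Lemma claim1D (n : nat) (p M : R) : (2 <= n)%N -> 1 <= p ->
  p <= (n%:R * ln (n%:R : R) - (n%:R - 1) * ln (n%:R - 1 : R)) / ln (n%:R : R) ->
  n%:R^-1 <= M -> M <= 1 ->
  ((n%:R - 2 + M) / (n%:R - 1)) ^+ (n - 1) <= M `^ (p - 1).
Proof.
move=> n2 p1.
set N : R := n%:R.
move=> pp0 Mlo Mhi.
have N2 : 2 <= N by rewrite /N (ler_nat R 2 n).
have N0 : 0 < N by lra.
move: pp0; set L1 := ln N; set L2 := ln (N - 1) => pp0.
have L1p : 0 < L1 by rewrite /L1 ln_gt0 //; lra.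
have L2p : 0 <= L2 by rewrite /L2 ln_ge0 //; lra.
have M0 : 0 < M by apply: lt_le_trans Mlo; rewrite invr_gt0.
set r0 := (N * L1 - (N - 1) * L2) / L1 - 1.
have er0 : r0 * L1 = (N - 1) * (L1 - L2).
  by rewrite /r0; field; rewrite gt_eqF.
have st1 : M `^ r0 <= M `^ (p - 1).
  apply: ger_powR; first by rewrite M0 Mhi.
  rewrite /r0; lra.
apply: le_trans st1.
set t := - ln M / L1.
have lnM : ln M = - (t * L1) by rewrite /t; field; rewrite gt_eqF.
have lnMle : ln M <= 0 by apply: ln_le0.
have lnMge : - L1 <= ln M.
  have : ln N^-1 <= ln M by rewrite ler_ln // posrE invr_gt0.
  by rewrite lnV ?posrE.
have t0 : 0 <= t by rewrite /t divr_ge0 //; lra.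
have t1 : t <= 1 by rewrite /t ler_pdivrMr // mul1r; lra.
have eM : M = expR (- (t * L1)) by rewrite -lnM lnK.
set X := (N - 2 + M) / (N - 1).
have N1 : 0 < N - 1 by lra.
have X0 : 0 < X by rewrite /X divr_gt0 //; lra.
have key : X <= expR (t * L2 - t * L1).
  have h1 := @powR_lin (N / (N - 1)) t (ltW (divr_gt0 N0 N1)) t0 t1.
  have iN1 : 0 < (N - 1)^-1 by rewrite invr_gt0.
  have h2 := @powR_lin ((N - 1)^-1) t (ltW iN1) t0 t1.
  rewrite /powR gt_eqF ?divr_gt0 // ln_div ?posrE // in h1.
  rewrite /powR gt_eqF ?invr_gt0 // lnV ?posrE // in h2.
  rewrite -/L1 -/L2 in h1 h2.
  have hc : (N - 2) / (N - 1) * expR (t * (L1 - L2)) + (N - 1)^-1 * expR (t * - L2) <= 1.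
    have w1 : 0 <= (N - 2) / (N - 1) by rewrite divr_ge0 //; lra.
    have w2 : 0 <= (N - 1)^-1 by rewrite invr_ge0; lra.
    apply: le_trans (lerD (ler_wpM2l w1 h1) (ler_wpM2l w2 h2)) _.
    rewrite le_eqVlt; apply/orP; left; apply/eqP.
    field; rewrite gt_eqF //.
  have eA : expR (t * (L1 - L2)) * expR (t * L2 - t * L1) = 1.
    by rewrite -expRD mulrBr addrC subrKA subrr expR0.
  have eB : expR (t * - L2) * expR (t * L2 - t * L1) = M.
    by rewrite -expRD eM; congr expR; ring.
  have E0 : 0 < expR (t * L2 - t * L1) by apply: expR_gt0.
  have := ler_wpM2r (ltW E0) hc.
  rewrite mul1r mulrDl => H; apply: le_trans H.
  rewrite -(mulrA ((N - 2) / (N - 1))) -(mulrA ((N - 1)^-1)) eA eB mulr1 /X.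
  rewrite le_eqVlt; apply/orP; left; apply/eqP; field.
  by rewrite -/N (gt_eqF N1).
have lnX : ln X <= t * L2 - t * L1.
  by rewrite -(expRK (t * L2 - t * L1)) ler_ln ?posrE ?expR_gt0.
rewrite /powR gt_eqF // -(lnK (exprn_gt0 (n - 1) X0)) ler_expR lnXn //.
rewrite lnM -mulr_natl natrB ?(leq_trans _ n2) // -/N.
have -> : r0 * - (t * L1) = (N - 1) * (t * L2 - t * L1).
  by rewrite mulrN mulrCA er0; ring.
by rewrite ler_wpM2l // ltW.
Qed.

Lemma claimC (n m : nat) (p : R) (z : 'I_m.+1 -> R) (i0 : 'I_m.+1) :
  (2 <= n)%N -> (m.+1 <= n)%N -> 1 <= p ->
  p <= (n%:R * ln (n%:R : R) - (n%:R - 1) * ln (n%:R - 1 : R)) / ln (n%:R : R) ->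
  (forall k, 0 <= z k) -> (forall k, z k <= 1) -> 1 <= \sum_k z k ->
  (forall k, z k <= z i0) ->
  n%:R^-1 <= z i0 /\ \prod_(k < m) (1 - z (lift i0 k)) <= z i0 `^ (p - 1).
Proof.
move=> n2 mn p1 pp0 z0 z1 zs zmax.
set M := z i0.
have M0 : 0 <= M by apply: z0.
have M1 : M <= 1 by apply: z1.
set N : R := n%:R.
have N2 : 2 <= N by rewrite /N (ler_nat R 2 n).
have hM : N^-1 <= M.
  have h1 : \sum_k z k <= \sum_(k < m.+1) M by apply: ler_sum => k _; apply: zmax.
  rewrite sumr_const card_ord in h1.
  have h2 : (m.+1)%:R * M <= N * M by rewrite ler_wpM2r // ler_nat.
  rewrite -mulr_natl in h1.
  rewrite -[N^-1]mul1r ler_pdivrMr; last by lra.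
  lra.
split => //.
pose I := ('I_m + 'I_(n - m.+1))%type.
pose E (x : I) : R := match x with inl k => 1 - z (lift i0 k) | inr _ => 1 end.
pose A : {pred I} := [pred _ | true].
have E0 : {in A, forall x, 0 <= E x}.
  by move=> [k|k] _ /=; rewrite ?subr_ge0 ?z1.
have cA : #|A| = (n - 1)%N.
  rewrite cardT -cardE card_sum !card_ord.
  lia.
have hprod : \prod_(x in A) E x = \prod_(k < m) (1 - z (lift i0 k)).
  by rewrite big_sumType /= [X in _ * X]big1_eq mulr1.
have hsum : \sum_(x in A) E x <= N - 2 + M.
  rewrite big_sumType /= sumr_const card_ord sumrB sumr_const card_ord.
  have hs : \sum_k z k = M + \sum_(k < m) z (lift i0 k) by rewrite (bigD1_ord i0).
  rewrite natrB // /N.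
  have : (m.+1)%:R = m%:R + 1 :> R by rewrite -natr1.
  move=> e; rewrite e; lra.
have agm := Order.le_of_leif (leif_AGM E0).
rewrite cA hprod in agm.
apply: le_trans agm _.
apply: (le_trans _ (@claim1D n p M n2 p1 pp0 hM M1)).
rewrite natrB ?(leq_trans _ n2) // -/N.
apply: lerXn2r.
- by rewrite nnegrE divr_ge0 ?sumr_ge0 //; lra.
- by rewrite nnegrE divr_ge0 //; lra.
- by rewrite ler_pM2r // invr_gt0; lra.
Qed.

Definition minor {m} (B : 'M[R]_m.+1) (i j : 'I_m.+1) : 'M[R]_m :=
  \matrix_(k, l) B (lift i k) (lift j l).

Lemma per_expand m (B : 'M[R]_m.+1) (i : 'I_m.+1) :
  per B = \sum_j B i j * per (minor B i j).
Proof.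
rewrite /per (partition_big (fun s : 'S_m.+1 => s i) predT) //=.
apply: eq_bigr => j _.
rewrite big_distrr /=.
rewrite (reindex (lift_perm i j)) /=; last first.
  pose ulsf i1 (s : 'S_m.+1) k := odflt k (unlift (s i1) (s (lift i1 k))).
  have ulsfK i1 (s : 'S_m.+1) k: lift (s i1) (ulsf i1 s k) = s (lift i1 k).
    rewrite /ulsf; have:= neq_lift i1 k.
    by rewrite -(can_eq (permK s)) => /unlift_some[] ? ? ->.
  have inj_ulsf: injective (ulsf i _).
    move=> s; apply: can_inj (ulsf (s i) s^-1%g) _ => k'.
    by rewrite {1}/ulsf ulsfK !permK liftK.
  exists (fun s => perm (inj_ulsf s)) => [s _ | s].
    by apply/permP=> k'; rewrite permE /ulsf lift_perm_lift lift_perm_id liftK.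
  move/(s _ =P _) => si0; apply/permP=> k.
  case: (unliftP i k) => [k'|] ->; rewrite ?lift_perm_id //.
  by rewrite lift_perm_lift -si0 permE ulsfK.
rewrite (eq_bigl predT) => [|s]; last by rewrite lift_perm_id eqxx.
apply: eq_bigr => s _.
rewrite (bigD1_ord i) //= lift_perm_id; congr (_ * _).
by apply: eq_bigr => k _; rewrite lift_perm_lift mxE.
Qed.

Lemma per_ge0 m (B : 'M[R]_m) : (forall i j, 0 <= B i j) -> 0 <= per B.
Proof. by move=> B0; rewrite /per sumr_ge0 // => s _; rewrite prodr_ge0. Qed.

Lemma per_abs m (A : 'M[R]_m) : `|per A| <= per (map_mx (fun x : R => `|x|) A).
Proof.
rewrite /per; apply: le_trans (ler_norm_sum _ _ _) _.
apply: ler_sum => s _; rewrite normr_prod le_eqVlt; apply/orP; left; apply/eqP.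
by apply: eq_bigr => i _; rewrite mxE.
Qed.

Lemma per_scale m (d : 'I_m -> R) (B : 'M[R]_m) :
  per (\matrix_(i, j) (d i * B i j)) = (\prod_i d i) * per B.
Proof.
rewrite /per mulr_sumr; apply: eq_bigr => s _.
by rewrite -big_split /=; apply: eq_bigr => i _; rewrite mxE.
Qed.

Lemma per_zero_row m (B : 'M[R]_m) i : (forall j, B i j = 0) -> per B = 0.
Proof.
move=> Bi0; rewrite /per big1 // => s _.
by rewrite (bigD1 i) //= Bi0 mul0r.
Qed.

Lemma per_id m : per (1%:M : 'M[R]_m) = 1.
Proof.
rewrite /per (bigD1 1%g) //= [X in _ + X]big1 ?addr0.
  by rewrite big1 // => i _; rewrite mxE perm1 eqxx.
move=> s /eqP sn1.
case: (pickP (fun i => s i != i)) => [i si|H]; last first.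
  by exfalso; apply: sn1; apply/permP => i; rewrite perm1; move/negbFE/eqP: (H i).
by rewrite (bigD1 i) //= mxE eq_sym (negbTE si) mul0r.
Qed.

Lemma per0 (B : 'M[R]_0) : per B = 1.
Proof.
rewrite /per (eq_bigr (fun=> 1)) ?sumr_const ?card_Sn //.
by move=> s _; rewrite big_ord0.
Qed.

Lemma powR_prod (I : finType) (P : pred I) (f : I -> R) (q : R) :
  (forall i, 0 <= f i) -> \prod_(i | P i) f i `^ q = (\prod_(i | P i) f i) `^ q.
Proof.
move=> f0.
suff : \prod_(i | P i) f i `^ q = (\prod_(i | P i) f i) `^ q /\ 0 <= \prod_(i | P i) f i by case.
apply: (big_ind2 (fun a b => a = b `^ q /\ 0 <= b)).
- by rewrite powR1.
- by move=> a1 a2 b1 b2 [-> h1] [-> h2]; split; [rewrite powRM | rewrite mulr_ge0].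
- by move=> i _; split.
Qed.

Arguments per_expand {m} B i.

Arguments per_ge0 {m} B.

Section Main.
Variable p : R.
Hypothesis p1 : 1 <= p.

Definition inS m (B : 'M[R]_m) :=
  (forall i j, 0 <= B i j) /\ (forall i, \sum_j B i j `^ p = 1).

Arguments inS {m}.

Lemma powRpK x : 0 <= x -> (x `^ p^-1) `^ p = x.
Proof.
move=> x0; have pn0 : p != 0 by rewrite gt_eqF // (lt_le_trans ltr01 p1).
by rewrite -powRrM mulVf // powRr1.
Qed.

Lemma N_to_H m : (forall B : 'M[R]_m, inS B -> per B <= 1) ->
  forall B : 'M[R]_m, (forall i j, 0 <= B i j) ->
  per B <= \prod_i (\sum_j B i j `^ p) `^ p^-1.
Proof.
move=> HN B B0.
have p0 : 0 < p := lt_le_trans ltr01 p1.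
set Ns := fun i => \sum_j B i j `^ p.
have Ns0 i : 0 <= Ns i by rewrite /Ns sumr_ge0 // => j _; apply: powR_ge0.
case: (pickP (fun i => Ns i == 0)) => [i /eqP Ni0 | Hnz].
  rewrite (@per_zero_row _ _ i); first by rewrite prodr_ge0 // => k _; apply: powR_ge0.
  move=> j; apply: (@powR_eq0_eq0 _ _ p).
  by apply: (psumr_eq0P _ Ni0) => // k _; apply: powR_ge0.
have Nsp i : 0 < Ns i by rewrite lt_neqAle eq_sym Hnz Ns0.
set d := fun i => Ns i `^ p^-1.
have dp i : 0 < d i by apply: powR_gt0.
set B' : 'M[R]_m := \matrix_(i, j) (B i j / d i).
have eB : B = \matrix_(i, j) (d i * B' i j).
  by apply/matrixP => i j; rewrite !mxE mulrC divfK // gt_eqF.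
rewrite {1}eB per_scale; apply: ler_piMr.
  by rewrite prodr_ge0 // => i _; exact: ltW.
apply: HN; split => [i j|i]; first by rewrite mxE divr_ge0 // ltW.
have e j : B' i j `^ p = B i j `^ p / Ns i.
  rewrite mxE.
  rewrite -[X in _ = X `^ _ / _](@divfK _ (d i)) ?gt_eqF //.
  rewrite [in RHS]powRM ?divr_ge0 ?(ltW (dp i)) // /d powRpK // mulfK // gt_eqF //.
rewrite (eq_bigr _ (fun j _ => e j)) -mulr_suml.
by move: (Nsp i); rewrite /Ns => h; rewrite divff // gt_eqF.
Qed.

Let p0 : 0 < p := lt_le_trans ltr01 p1.

Let pn0 : p != 0. Proof. by rewrite gt_eqF. Qed.

Lemma powR_le1' (x r : R) : 0 <= x -> x <= 1 -> 0 <= r -> x `^ r <= 1.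
Proof.
move=> x0 x1 r0; have [->|xp] := eqVneq x 0.
  by rewrite /powR eqxx; case: (r == 0).
by apply: powR_le1 => //; rewrite lt_neqAle eq_sym xp.
Qed.

Lemma inS_le1 m (B : 'M[R]_m) i j : inS B -> B i j `^ p <= 1 /\ B i j <= 1.
Proof.
move=> [B0 Bs].
have h : B i j `^ p <= 1.
  rewrite -(Bs i) (bigD1 j) //= lerDl sumr_ge0 // => k _; apply: powR_ge0.
split => //.
rewrite leNgt; apply/negP => h1.
have : B i j <= B i j `^ p by apply: le1r_powR => //; apply: ltW.
move=> h2; have : B i j <= 1 by apply: le_trans h2 h.
by rewrite leNgt h1.
Qed.

Arguments inS_le1 {m B} i j.

Lemma minor_row m (B : 'M[R]_m.+1) i0 j k : inS B ->
  \sum_l (minor B i0 j) k l `^ p = 1 - B (lift i0 k) j `^ p.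
Proof.
move=> [_ Bs]; rewrite -(Bs (lift i0 k)) (bigD1_ord j) //= addrC addrK.
by apply: eq_bigr => l _; rewrite mxE.
Qed.

Definition Hprop m := forall B : 'M[R]_m, (forall i j, 0 <= B i j) ->
  per B <= \prod_i (\sum_j B i j `^ p) `^ p^-1.

Lemma cof_bound m (B : 'M[R]_m.+1) i0 j : Hprop m ->
  inS B -> per (minor B i0 j) <= (\prod_k (1 - B (lift i0 k) j `^ p)) `^ p^-1.
Proof.
move=> H hB; have [B0 _] := hB.
apply: le_trans (H _ _) _; first by move=> k l; rewrite mxE.
rewrite -powR_prod; last by move=> k; rewrite subr_ge0; case: (inS_le1 (lift i0 k) j hB).
by rewrite le_eqVlt; apply/orP; left; apply/eqP/eq_bigr => k _; rewrite minor_row.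
Qed.

Arguments cof_bound {m B} i0 j.

Lemma cof_le1 m (B : 'M[R]_m.+1) i0 j : Hprop m -> inS B -> per (minor B i0 j) <= 1.
Proof.
move=> H hB; apply: le_trans (cof_bound i0 j H hB) _.
apply: powR_le1'; last by rewrite invr_ge0 ltW.
- by apply: prodr_ge0 => k _; rewrite subr_ge0; case: (inS_le1 (lift i0 k) j hB).
- apply: prodr_ile1 => k _; rewrite subr_ge0 gerBl powR_ge0 andbT.
  by case: (inS_le1 (lift i0 k) j hB).
Qed.

Arguments cof_le1 {m B} i0 j.

Lemma step_p1 m (B : 'M[R]_m.+1) : p = 1 -> Hprop m -> inS B -> per B <= 1.
Proof.
move=> ep H hB; have [B0 Bs] := hB.
rewrite (per_expand B ord0).
have h : \sum_j B ord0 j * per (minor B ord0 j) <= \sum_j B ord0 j.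
  by apply: ler_sum => j _; rewrite ler_piMr // (cof_le1 _ _ H hB).
apply: le_trans h _; rewrite -(Bs ord0) ep le_eqVlt; apply/orP; left; apply/eqP.
by apply: eq_bigr => j _; rewrite powRr1.
Qed.

Lemma powR_div (x y r : R) : 0 <= x -> 0 < y -> (x / y) `^ r = x `^ r / y `^ r.
Proof.
move=> x0 y0.
have e : (x / y * y) `^ r = (x / y) `^ r * y `^ r.
  by rewrite powRM // ?divr_ge0 // ltW.
rewrite divfK ?gt_eqF // in e.
by rewrite e mulfK // gt_eqF // powR_gt0.
Qed.

Lemma powRsK (x s : R) : 0 <= x -> s != 0 -> (x `^ s^-1) `^ s = x.
Proof. by move=> x0 sn0; rewrite -powRrM mulVf // powRr1. Qed.

Lemma row_opt m (B : 'M[R]_m.+1) (i0 : 'I_m.+1) (U : R) : 1 < p -> 0 < U ->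
  (forall B' : 'M[R]_m.+1, inS B' -> per B' <= U) -> inS B ->
  \sum_j (per (minor B i0 j) / U) `^ (p / (p - 1)) <= 1.
Proof.
move=> hp U0 hU hB; have [B0 Bs] := hB.
set s := p / (p - 1).
have s1 : 1 < s by rewrite /s ltr_pdivlMr ?subr_gt0 // mul1r; lra.
have s0 : 0 < s by lra.
have sn0 : s != 0 by rewrite gt_eqF.
set c := fun j => per (minor B i0 j).
have c0 j : 0 <= c j by apply: per_ge0 => k l; rewrite mxE.
set Ks := \sum_j c j `^ s.
have Ks0 : 0 <= Ks by apply: sumr_ge0 => j _; apply: powR_ge0.
have [Kz|Knz] := eqVneq Ks 0.
  have cz j : c j = 0.
    by apply: (@powR_eq0_eq0 _ _ s); apply: (psumr_eq0P _ Kz) => // k _; apply: powR_ge0.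
  rewrite big1 // => j _; rewrite -/(c j) cz mul0r powR0 //.
have Ksp : 0 < Ks by rewrite lt_neqAle eq_sym Knz.
set K := Ks `^ s^-1.
have Kp : 0 < K by apply: powR_gt0.
have KsK : K `^ s = Ks by apply: powRsK.
set B' : 'M[R]_m.+1 := \matrix_(i, j) if i == i0 then (c j / K) `^ (s - 1) else B i j.
have es1 : (s - 1) * p = s by rewrite /s; field; rewrite subr_eq0 gt_eqF.
have ecK j : (c j / K) `^ s = c j `^ s / Ks by rewrite powR_div // KsK.
have hB' : inS B'.
  split => [i j|i]; rewrite ?mxE; first by case: (i == i0) => //; apply: powR_ge0.
  under eq_bigr => j _ do rewrite mxE.
  case: (i =P i0) => [_|_]; last by rewrite Bs.
  under eq_bigr => j _ do rewrite -powRrM es1 ecK.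
  by rewrite -mulr_suml divff.
have em j : minor B' i0 j = minor B i0 j.
  by apply/matrixP => k l; rewrite !mxE eq_sym (negbTE (neq_lift i0 k)).
have pB' : per B' = K.
  rewrite (per_expand B' i0).
  under eq_bigr => j _ do rewrite em mxE eqxx.
  have e j : (c j / K) `^ (s - 1) * per (minor B i0 j) = K * (c j `^ s / Ks).
    have ex : per (minor B i0 j) = K * (c j / K) by rewrite mulrC divfK // gt_eqF.
    by rewrite ex mulrCA (mulrC _ (c j / K)) mulr_powRB1 ?divr_ge0 ?(ltW Kp) // ecK.
  under eq_bigr => j _ do rewrite e.
  by rewrite -mulr_sumr -mulr_suml divff ?mulr1 // gt_eqF.
have KU : K <= U by rewrite -pB'; apply: hU.
under eq_bigr => j _ do rewrite (@powR_div (c j) U s (c0 j) U0).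
rewrite -mulr_suml -/Ks -KsK.
rewrite ler_pdivrMr ?(@powR_gt0 _ U s U0) // mul1r.
apply: ge0_ler_powR => //.
- exact: ltW.
- by rewrite nnegrE ltW.
- by rewrite nnegrE ltW.
Qed.

Arguments row_opt {m B} i0 U.

Lemma key (n m : nat) (B : 'M[R]_m.+1) (U : R) : (2 <= n)%N -> (m.+1 <= n)%N ->
  p <= (n%:R * ln (n%:R : R) - (n%:R - 1) * ln (n%:R - 1 : R)) / ln (n%:R : R) ->
  1 < p -> 1 < U -> (forall B' : 'M[R]_m.+1, inS B' -> per B' <= U) -> Hprop m -> inS B ->
  per B <= U * (1 - (p^-1 - U^-1 + U^-1 `^ (p / (p - 1)) / (p / (p - 1))) / n%:R).
Proof.
move=> n2 mn pp0 hp U1 hU H hB; have [B0 Bs] := hB.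
set s := p / (p - 1).
have s1 : 1 < s by rewrite /s ltr_pdivlMr ?subr_gt0 // mul1r; lra.
have s0 : 0 < s by lra.
have ps : p^-1 + s^-1 = 1 by rewrite /s invf_div; field; rewrite gt_eqF.
have U0 : 0 < U by lra.
set y := fun i j => B i j `^ p.
set colsum := fun j => \sum_i y i j.
have tot : \sum_j colsum j = (m.+1)%:R.
  rewrite /colsum exchange_big /=.
  by rewrite (eq_bigr (fun=> 1)) ?sumr_const ?card_ord // => i _; apply: Bs.
case: (@arg_maxP _ _ _ ord0 predT colsum isT) => j0 _ Hj0.
have hj0 : 1 <= colsum j0.
  have h : \sum_j colsum j <= \sum_(j < m.+1) colsum j0 by apply: ler_sum => j _; apply: Hj0.
  rewrite tot sumr_const card_ord -mulr_natl in h.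
  have mp : 0 < (m.+1)%:R :> R by rewrite ltr0n.
  nra.
case: (@arg_maxP _ _ _ ord0 predT (fun i => y i j0) isT) => i0 _ Hi0.
have [hy hpi] := @claimC n m p (fun i => y i j0) i0 n2 mn p1 pp0
  (fun k => powR_ge0 _ _) (fun k => (inS_le1 k j0 hB).1) hj0 (fun k => Hi0 k isT).
set a := B i0 j0.
set c := fun j => per (minor B i0 j).
have c0 j : 0 <= c j by apply: per_ge0 => k l; rewrite mxE.
have hc : c j0 <= a `^ (p - 1).
  apply: le_trans (cof_bound i0 j0 H hB) _.
  have e : (y i0 j0 `^ (p - 1)) `^ p^-1 = a `^ (p - 1).
    by rewrite /y -!powRrM; congr powR; field.
  rewrite -e; apply: ge0_ler_powR => //.
  - by rewrite invr_ge0 ltW.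
  - rewrite nnegrE; apply: prodr_ge0 => k _; rewrite subr_ge0.
    by case: (inS_le1 (lift i0 k) j0 hB).
  - by rewrite nnegrE powR_ge0.
set V := U^-1.
have V0 : 0 < V by rewrite invr_gt0.
have V1 : V < 1 by rewrite invf_lt1.
set b := fun j => c j / U.
have b0 j : 0 <= b j by rewrite divr_ge0 // ltW.
have hb : b j0 <= a `^ (p - 1) * V by rewrite ler_wpM2r // ltW.
have hopt : \sum_j b j `^ s <= 1 := row_opt i0 U hp U0 hU hB.
have eper : per B = U * \sum_j B i0 j * b j.
  rewrite (per_expand B i0) mulr_sumr; apply: eq_bigr => j _.
  rewrite /b /c; field; exact: (lt0r_neq0 U0).
rewrite eper ler_pM2l //.
have hsum : \sum_j B i0 j * b j <= a * b j0 + (1 - a `^ p) / p + (1 - b j0 `^ s) / s.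
  rewrite (bigD1 j0) //= -addrA lerD2l.
  have h1 : \sum_(j | j != j0) B i0 j * b j <=
            \sum_(j | j != j0) (B i0 j `^ p / p + b j `^ s / s).
    by apply: ler_sum => j _; apply: conjugate_powR.
  apply: le_trans h1 _.
  rewrite big_split /= -!mulr_suml.
  have e1 : \sum_(j | j != j0) B i0 j `^ p = 1 - a `^ p.
    have := Bs i0; rewrite (bigD1 j0) //= -/a => h; lra.
  have e2 : \sum_(j | j != j0) b j `^ s <= 1 - b j0 `^ s.
    move: hopt; rewrite (bigD1 j0) //= => h; lra.
  rewrite e1 lerD2l ler_pM2r ?invr_gt0 //.
have hyg := @young_gap p s a (b j0) V hp s1 ps (B0 i0 j0) V0 (ltW V1) (b0 j0) hb.
apply: le_trans hsum _; apply: le_trans hyg _.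
set k := p^-1 - V + V `^ s / s.
have kpos : 0 < k.
  have := @powR_strict V s V0 V1 s1.
  have -> : k = (V `^ s - s * V + (s - 1)) / s.
    have ep : p^-1 = 1 - s^-1 by rewrite -ps addrK.
    rewrite /k ep; field; exact: (lt0r_neq0 s0).
  by move=> h; rewrite divr_gt0.
rewrite lerD2l lerN2 -/y.
by rewrite (mulrC (a `^ p)) ler_pM2l.
Qed.

Lemma kappa_pos (U : R) : 1 < p -> 1 < U ->
  0 < p^-1 - U^-1 + U^-1 `^ (p / (p - 1)) / (p / (p - 1)).
Proof.
move=> hp U1.
set s := p / (p - 1).
have s1 : 1 < s by rewrite /s ltr_pdivlMr ?subr_gt0 // mul1r; lra.
have s0 : 0 < s by lra.
have ps : p^-1 + s^-1 = 1 by rewrite /s invf_div; field; rewrite gt_eqF.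
have U0 : 0 < U by lra.
set V := U^-1.
have V0 : 0 < V by rewrite invr_gt0.
have V1 : V < 1 by rewrite invf_lt1.
have := @powR_strict V s V0 V1 s1.
have -> : p^-1 - V + V `^ s / s = (V `^ s - s * V + (s - 1)) / s.
  have ep : p^-1 = 1 - s^-1 by rewrite -ps addrK.
  rewrite ep; field; exact: (lt0r_neq0 s0).
by move=> h; rewrite divr_gt0.
Qed.

Lemma inS_id m : inS (1%:M : 'M[R]_m).
Proof.
split => [i j|i]; first by rewrite mxE ler0n.
rewrite (bigD1 i) //= big1 ?addr0 => [|j ji]; first by rewrite mxE eqxx powR1.
by rewrite mxE eq_sym (negbTE ji) powR0.
Qed.

Lemma per_le_fact m (B : 'M[R]_m) : inS B -> per B <= (m`!)%:R.
Proof.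
move=> hB; have [B0 _] := hB.
have -> : (m`!)%:R = \sum_(s : 'S_m) (1 : R) by rewrite sumr_const card_Sn.
apply: ler_sum => s _; apply: prodr_ile1 => i _.
by rewrite B0 /=; case: (inS_le1 i (s i) hB).
Qed.

Lemma stepN (n m : nat) : (2 <= n)%N -> (m.+1 <= n)%N ->
  p <= (n%:R * ln (n%:R : R) - (n%:R - 1) * ln (n%:R - 1 : R)) / ln (n%:R : R) ->
  Hprop m -> forall B : 'M[R]_m.+1, inS B -> per B <= 1.
Proof.
move=> n2 mn pp0 H.
have [ep|hp] : p = 1 \/ 1 < p.
  by move: p1; rewrite le_eqVlt => /orP[/eqP e|e]; [left|right].
  by move=> B hB; apply: step_p1.
set E := [set x : R | exists B : 'M[R]_m.+1, inS B /\ per B = x]%classic.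
have hub : has_ubound E.
  by exists ((m.+1)`!)%:R => x [B [hB <-]]; apply: per_le_fact.
set U := sup E.
have hU : forall B : 'M[R]_m.+1, inS B -> per B <= U.
  by move=> B hB; apply: ub_le_sup hub _ _; exists B.
have U1 : 1 <= U by rewrite -(per_id m.+1); apply: hU; apply: inS_id.
suff hU1 : U <= 1 by move=> B hB; apply: le_trans (hU B hB) hU1.
rewrite leNgt; apply/negP => Ugt1.
have hk := fun B => @key n m B U n2 mn pp0 hp Ugt1 hU H.
set k := p^-1 - U^-1 + U^-1 `^ (p / (p - 1)) / (p / (p - 1)) in hk.
have kp : 0 < k by apply: kappa_pos.
have : U <= U * (1 - k / n%:R).
  apply: ge_sup; first by exists 1, 1%:M; split; [apply: inS_id | apply: per_id].
  by move=> x [B [hB <-]]; apply: hk.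
have n0 : 0 < n%:R :> R by rewrite ltr0n (leq_trans _ n2).
have : 0 < U * (k / n%:R) by rewrite mulr_gt0 ?divr_gt0 //; lra.
rewrite mulrBr mulr1; lra.
Qed.

Lemma mainN (n : nat) : (2 <= n)%N ->
  p <= (n%:R * ln (n%:R : R) - (n%:R - 1) * ln (n%:R - 1 : R)) / ln (n%:R : R) ->
  forall m, (m <= n)%N -> forall B : 'M[R]_m, inS B -> per B <= 1.
Proof.
move=> n2 pp0; elim => [|m IHm] hm B hB; first by rewrite per0.
apply: (@stepN n m n2 hm pp0 _ B hB).
exact: (@N_to_H m (IHm (ltnW hm))).
Qed.

End Main.
End All.

Theorem theorem1p3 (R : realType) (n : nat) (p : R) :
  (2 <= n)%N ->
  1 <= p ->
  p <= (n%:R * ln (n%:R : R) - (n%:R - 1) * ln (n%:R - 1 : R)) / ln (n%:R : R) ->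
  is_U n p 1.
Proof.
move=> n2 p1 pp0.
split.
  exists 1%:M; split; last exact: per_id.
  move=> i; rewrite /lpnorm_row.
  have [_ hs] := @inS_id R p p1 n.
  rewrite (eq_bigr (fun j => (1%:M : 'M[R]_n) i j `^ p)) => [|j _].
    by rewrite hs powR1.
  by rewrite ger0_norm // mxE ler0n.
move=> A hA.
set B := map_mx (fun x : R => `|x|) A.
have hB : @inS R p n B.
  split => [i j|i]; first by rewrite mxE normr_ge0.
  have := hA i; rewrite /lpnorm_row => h.
  rewrite (eq_bigr (fun j => `|A i j| `^ p)) => [|j _]; last by rewrite mxE.
  have S0 : 0 <= \sum_j `|A i j| `^ p by apply: sumr_ge0 => j _; apply: powR_ge0.
  by rewrite -(@powRpK R p p1 _ S0) h powR1.
apply: (le_trans (ler_norm (per A))).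
apply: (le_trans (@per_abs R n A)).
exact: (@mainN R p p1 n n2 pp0 n (leqnn n) B hB).
Qed.
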